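(* Let $a,b,l$ be positive integers, $\alpha\in(0,1)$, $\delta\ge0$, $\epsilon\ge0$, and $G:\mathbb{R}^k\to\mathbb{R}^n$. If $A\in\mathbb{R}^{m\times n}$ satisfies S-REC$(S_{(a+b)l/2,G'},\,1-\alpha,\,\delta)$ and RIP$(bl,\alpha)$, then for every $\eta\in T_A(\epsilon)$, $$\|\eta\|_2\le(bl)^{-1/2}(C_0+1)\,\sigma_{al,G'}(\eta)+C_1\epsilon+\delta',$$ where $C_0=(1-\alpha)^{-1}(1+\alpha)$, $C_1=(1-\alpha)^{-1}$, $\delta'=\delta(1-\alpha)^{-1}$.
   Context: For $v\in\mathbb{R}^n$ and $s\ge0$, $S_s(v)=\{x\in\mathbb{R}^n:\|x-v\|_0\le s\}$ ($\|\cdot\|_0$ counts nonzero coordinates), and $S_s=S_s(0)$. The difference function is $G'(z_1,z_2)=G(z_1)-G(z_2)$, and $S_{s,G'}=\{G(z_1)-G(z_2)+\nu: z_1,z_2\in\mathbb{R}^k,\ \nu\in S_s\}$; $\sigma_{s,G'}(x)=\inf_{\hat x\in S_{s,G'}}\|x-\hat x\|_1$. $T_A(\epsilon)=\{w\in\mathbb{R}^n:\|Aw\|_2\le\epsilon\}$. A matrix $A$ satisfies RIP$(s,\alpha)$ if $(1-\alpha)\|x\|_2\le\|Ax\|_2\le(1+\alpha)\|x\|_2$ for all $x\in S_s$. For $S\subseteq\mathbb{R}^n$, $\gamma>0$, $\delta\ge0$, $A$ satisfies S-REC$(S,\gamma,\delta)$ if $\|A(x_1-x_2)\|_2\ge\gamma\|x_1-x_2\|_2-\delta$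 for all $x_1,x_2\in S$. *)

(* Defs.v *)
From Stdlib Require Import Reals Lra.
From mathcomp Require Import ssreflect ssrbool eqtype ssrnat seq fintype.
Set Implicit Arguments.
Unset Strict Implicit.
Open Scope R_scope.

Definition vec (n : nat) := 'I_n -> R.
Definition mat (m n : nat) := 'I_m -> 'I_n -> R.

Definition rsum (n : nat) (f : 'I_n -> R) : R :=
  foldr Rplus 0 [seq f i | i <- enum 'I_n].

Definition vzero (n : nat) : vec n := fun _ => 0.
Definition vadd (n : nat) (x y : vec n) : vec n := fun i => x i + y i.
Definition vsub (n : nat) (x y : vec n) : vec n := fun i => x i - y i.
Definition mulmv (m n : nat) (A : mat m n) (x : vec n) : vec m :=
  fun i => rsum (fun j => A i j * x j).

Definition norm0 (n : nat) (x : vec n) : nat :=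
  size [seq i <- enum 'I_n | if Req_EM_T (x i) 0 then false else true].
Definition norm1 (n : nat) (x : vec n) : R := rsum (fun i => Rabs (x i)).
Definition norm2 (n : nat) (x : vec n) : R := sqrt (rsum (fun i => x i ^ 2)).

Definition S_sparse (n : nat) (s : R) (v : vec n) : vec n -> Prop :=
  fun x => INR (norm0 (vsub x v)) <= s.

Definition S_G' (k n : nat) (s : R) (G : vec k -> vec n) : vec n -> Prop :=
  fun x => exists (z1 z2 : vec k) (nu : vec n),
      S_sparse s (@vzero n) nu /\ x = vadd (vsub (G z1) (G z2)) nu.

Definition T_A (m n : nat) (A : mat m n) (eps : R) : vec n -> Prop :=
  fun w => norm2 (mulmv A w) <= eps.

Definition RIP (m n : nat) (A : mat m n) (s alpha : R) : Prop :=
  forall x : vec n, S_sparse s (@vzero n) x ->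
    (1 - alpha) * norm2 x <= norm2 (mulmv A x) <= (1 + alpha) * norm2 x.

Definition SREC (m n : nat) (A : mat m n) (S : vec n -> Prop) (gamma delta : R)
  : Prop :=
  forall x1 x2 : vec n, S x1 -> S x2 ->
    norm2 (mulmv A (vsub x1 x2)) >= gamma * norm2 (vsub x1 x2) - delta.

(* sigma_{s,G'}(x) = inf_{xh in S_{s,G'}} ||x - xh||_1  (s a natural number) *)
Lemma rsum_nonneg (n : nat) (f : 'I_n -> R) :
  (forall i, 0 <= f i) -> 0 <= rsum f.
Proof.
move=> H; rewrite /rsum; elim: (enum 'I_n) => [|i0 l0 IH] /=; first lra.
have := H i0; lra.
Qed.

Lemma norm1_nonneg (n : nat) (x : vec n) : 0 <= norm1 x.
Proof. apply: rsum_nonneg => i; exact: Rabs_pos. Qed.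

Definition sigma_set (k n s : nat) (G : vec k -> vec n) (x : vec n) : R -> Prop :=
  fun y => exists xh, S_G' (INR s) G xh /\ y = - norm1 (vsub x xh).

Lemma sigma_set_bound k n s G x : bound (@sigma_set k n s G x).
Proof.
exists 0 => y [xh [_ ->]]; have := norm1_nonneg (vsub x xh); lra.
Qed.

Lemma sigma_set_ne k n s G x : exists y, @sigma_set k n s G x y.
Proof.
set z := @vzero k.
exists (- norm1 (vsub x (vadd (vsub (G z) (G z)) (@vzero n)))).
exists (vadd (vsub (G z) (G z)) (@vzero n)); split => //.
exists z, z, (@vzero n); split => //.
rewrite /S_sparse /norm0.
have -> : size [seq i <- enum 'I_n | if Req_EM_T (vsub (@vzero n) (@vzero n) i) 0
                                then false else true] = 0%nat.
  apply/eqP; rewrite size_filter -leqn0 leqNgt -has_count; apply/negP => /hasP [i _].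
  rewrite /vsub /vzero Rminus_0_r.
  by case: (Req_EM_T 0 0).
by apply: pos_INR.
Qed.

Definition sigma_G' (k n s : nat) (G : vec k -> vec n) (x : vec n) : R :=
  - proj1_sig (completeness _ (sigma_set_bound s G x) (sigma_set_ne s G x)).

(* Main.v *)
Require Import Defs.
From Stdlib Require Import Reals Lra Lia FunctionalExtensionality.
From mathcomp Require Import ssreflect ssrbool eqtype ssrnat seq fintype div zify.
Set Implicit Arguments.
Unset Strict Implicit.
Open Scope R_scope.

Definition lsum (T : Type) (s : seq T) (f : T -> R) : R := foldr Rplus 0 (map f s).

Lemma lsum_cons T (x : T) s f : lsum (x :: s) f = f x + lsum s f.
Proof. by []. Qed.

Lemma lsum_ext T (s : seq T) f g : (forall i, f i = g i) -> lsum s f = lsum s g.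
Proof. move=> H; elim: s => [|x s IH] //=; rewrite /lsum /= -/(lsum s f) -/(lsum s g) IH H //. Qed.

Lemma lsum_add T (s : seq T) f g : lsum s (fun i => f i + g i) = lsum s f + lsum s g.
Proof. elim: s => [|x s IH]; rewrite /lsum /=; first lra.
rewrite -/(lsum s f) -/(lsum s g) -/(lsum s _) IH; lra. Qed.

Lemma lsum_scal T (s : seq T) c f : lsum s (fun i => c * f i) = c * lsum s f.
Proof. elim: s => [|x s IH]; rewrite /lsum /=; first lra.
rewrite -/(lsum s f) -/(lsum s _) IH; lra. Qed.

Lemma lsum_le T (s : seq T) f g : (forall i, f i <= g i) -> lsum s f <= lsum s g.
Proof. move=> H; elim: s => [|x s IH]; rewrite /lsum /=; first lra.
rewrite -/(lsum s f) -/(lsum s g); have := H x; lra. Qed.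

Lemma lsum_nonneg T (s : seq T) f : (forall i, 0 <= f i) -> 0 <= lsum s f.
Proof. move=> H; have := @lsum_le T s (fun _ => 0) f H.
have -> : lsum s (fun _ => 0) = 0 by elim: s => [|x s IH] //; rewrite lsum_cons IH; lra.
done. Qed.

Lemma lsum_const_if T (s : seq T) (P : pred T) c :
  lsum s (fun i => if P i then c else 0) = c * INR (count P s).
Proof. elim: s => [|x s IH]; rewrite /lsum /=; first lra.
rewrite -/(lsum s _) IH; case: (P x); rewrite ?S_INR ?plus_INR /=; lra. Qed.

Lemma lsum_sq_le T (s : seq T) f : (forall i, 0 <= f i) ->
  lsum s (fun i => f i ^ 2) <= (lsum s f) ^ 2.
Proof. move=> H; elim: s => [|x s IH]; first by rewrite /lsum /=; lra.
rewrite !lsum_cons.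
have := H x; have := @lsum_nonneg T s f H. move: IH. nra. Qed.

Lemma lsum_sq_max T (s : seq T) f c : (forall i, Rabs (f i) <= c) ->
  lsum s (fun i => f i ^ 2) <= c * lsum s (fun i => Rabs (f i)).
Proof. move=> H; rewrite -lsum_scal; apply: lsum_le => i.
rewrite -pow2_abs; have := H i; have := Rabs_pos (f i); nra. Qed.

Definition nzb (T : Type) (f : T -> R) (i : T) : bool :=
  if Req_EM_T (f i) 0 then false else true.

Lemma nzbP T (f : T -> R) i : nzb f i = true <-> f i <> 0.
Proof. rewrite /nzb; case: (Req_EM_T (f i) 0) => h; split => //. Qed.

Lemma nzbF T (f : T -> R) i : nzb f i = false <-> f i = 0.
Proof. rewrite /nzb; case: (Req_EM_T (f i) 0) => h; split => //. Qed.

Lemma lsum_abs_count T (s : seq T) f c : 0 <= c -> (forall i, Rabs (f i) <= c) ->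
  lsum s (fun i => Rabs (f i)) <= c * INR (count (nzb f) s).
Proof. move=> c0 H; elim: s => [|x s IH]; rewrite /lsum /=; first lra.
rewrite -/(lsum s _); case E: (nzb f x).
- rewrite plus_INR /=; have := H x; lra.
- move/nzbF: E => ->; rewrite Rabs_R0 add0n; lra. Qed.

Lemma lsum_CS T (s : seq T) f g :
  lsum s (fun i => f i * g i) <=
  sqrt (lsum s (fun i => f i ^ 2)) * sqrt (lsum s (fun i => g i ^ 2)).
Proof.
set a := lsum s (fun i => f i ^ 2); set b := lsum s (fun i => g i ^ 2);
set p := lsum s (fun i => f i * g i).
have quad : forall t, 0 <= a + 2 * t * p + t ^ 2 * b.
  move=> t; have : 0 <= lsum s (fun i => (f i + t * g i) ^ 2).
    by apply: lsum_nonneg => i; apply: pow2_ge_0.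
  have -> : lsum s (fun i => (f i + t * g i) ^ 2) =
     lsum s (fun i => f i ^ 2) + lsum s (fun i => (2 * t) * (f i * g i)) +
     lsum s (fun i => t ^ 2 * g i ^ 2).
    rewrite -!lsum_add; apply: lsum_ext => i; ring.
  rewrite !lsum_scal -/a -/b -/p; lra.
have a0 : 0 <= a by apply: lsum_nonneg => i; apply: pow2_ge_0.
have b0 : 0 <= b by apply: lsum_nonneg => i; apply: pow2_ge_0.
have key : p ^ 2 <= a * b.
  case: (Req_EM_T b 0) => hb.
  - case: (Req_EM_T p 0) => hp; first by rewrite hp hb; lra.
    have := quad (- (a + 1) / (2 * p)). rewrite hb.
    have -> : a + 2 * (- (a + 1) / (2 * p)) * p + (- (a + 1) / (2 * p)) ^ 2 * 0 = -1
      by field.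
    lra.
  - have := quad (- p / b).
    have -> : a + 2 * (- p / b) * p + (- p / b) ^ 2 * b = (a * b - p ^ 2) / b by field.
    move=> h; have bp : 0 < b by lra.
    have : 0 <= (a * b - p ^ 2) / b * b by apply: Rmult_le_pos; lra.
    have -> : (a * b - p ^ 2) / b * b = a * b - p ^ 2 by field. lra.
rewrite -sqrt_mult //.
apply: Rle_trans (Rle_abs p) _.
rewrite -(sqrt_pow2 (Rabs p) (Rabs_pos p)) pow2_abs.
by apply: sqrt_le_1_alt.
Qed.

Lemma lsum_mink T (s : seq T) f g :
  sqrt (lsum s (fun i => (f i + g i) ^ 2)) <=
  sqrt (lsum s (fun i => f i ^ 2)) + sqrt (lsum s (fun i => g i ^ 2)).
Proof.
have a0 : 0 <= lsum s (fun i => f i ^ 2) by apply: lsum_nonneg => i; apply: pow2_ge_0.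
have b0 : 0 <= lsum s (fun i => g i ^ 2) by apply: lsum_nonneg => i; apply: pow2_ge_0.
have -> : lsum s (fun i => (f i + g i) ^ 2) =
  lsum s (fun i => f i ^ 2) + lsum s (fun i => 2 * (f i * g i)) + lsum s (fun i => g i ^ 2).
  rewrite -!lsum_add; apply: lsum_ext => i; ring.
rewrite lsum_scal.
have cs := @lsum_CS T s f g.
have sa := sqrt_pos (lsum s (fun i => f i ^ 2)).
have sb := sqrt_pos (lsum s (fun i => g i ^ 2)).
rewrite -(sqrt_pow2 (_ + _) (Rplus_le_le_0_compat _ _ sa sb)).
apply: sqrt_le_1_alt.
have := pow2_sqrt _ a0; have := pow2_sqrt _ b0. nra.
Qed.

Section Vec.
Variable n : nat.
Local Notation E := (enum 'I_n).

Lemma rsumE (f : 'I_n -> R) : rsum f = lsum E f.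
Proof. by []. Qed.

Lemma norm0E (x : vec n) : norm0 x = count (nzb x) E.
Proof. by rewrite /norm0 size_filter. Qed.

Lemma norm2_ge0 (x : vec n) : 0 <= norm2 x.
Proof. exact: sqrt_pos. Qed.

Lemma norm1_ge0 (x : vec n) : 0 <= norm1 x.
Proof. exact: norm1_nonneg. Qed.

Lemma norm2_add (x y : vec n) : norm2 (vadd x y) <= norm2 x + norm2 y.
Proof. exact: lsum_mink. Qed.

Lemma norm2_abs (x : vec n) : norm2 (fun i => Rabs (x i)) = norm2 x.
Proof. rewrite /norm2 !rsumE; congr sqrt; apply: lsum_ext => i; exact: pow2_abs. Qed.

Lemma norm2_opp (x : vec n) : norm2 (fun i => - x i) = norm2 x.
Proof. rewrite /norm2 !rsumE; congr sqrt; apply: lsum_ext => i; ring. Qed.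

Lemma mulmv_add m (A : mat m n) x y :
  mulmv A (vadd x y) = vadd (mulmv A x) (mulmv A y).
Proof. apply: functional_extensionality => i; rewrite /mulmv /vadd !rsumE -lsum_add.
apply: lsum_ext => j; ring. Qed.

Lemma mulmv_opp m (A : mat m n) x :
  mulmv A (fun i => - x i) = fun i => - mulmv A x i.
Proof. apply: functional_extensionality => i; rewrite /mulmv !rsumE.
have -> : - lsum E (fun j => A i j * x j) = -1 * lsum E (fun j => A i j * x j) by ring.
rewrite -lsum_scal; apply: lsum_ext => j; ring. Qed.

Definition restr (P : pred 'I_n) (h : vec n) : vec n :=
  fun i => if P i then h i else 0.

Lemma restr_split (P : pred 'I_n) h : vadd (restr P h) (restr (fun i => ~~ P i) h) = h.
Proof. apply: functional_extensionality => i; rewrite /vadd /restr; case: (P i) => /=; ring. Qed.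

Lemma count_split (T : Type) (P p : pred T) s :
  (count (fun i => P i && p i) s + count (fun i => ~~ P i && p i) s = count p s)%N.
Proof. elim: s => [|x s IH] //=; case: (P x); case: (p x) => /=; rewrite -IH ?add0n ?add1n ?addSn ?addnS //. Qed.

Lemma norm0_le_count (P : pred 'I_n) (y : vec n) :
  (forall i, ~~ P i -> y i = 0) -> (norm0 y <= count P E)%N.
Proof. move=> H; rewrite norm0E; apply: sub_count => i.
case E1: (P i) => //; move/negbT: E1 => /H yi; rewrite /nzb yi.
by case: (Req_EM_T 0 0). Qed.

Lemma norm0_zero (y : vec n) : (forall i, y i = 0) -> norm0 y = 0%N.
Proof. move=> H; apply/eqP; rewrite -leqn0 -(count_pred0 E).
by apply: norm0_le_count => i _; apply: H. Qed.

Lemma norm0_pos (y : vec n) j : y j <> 0 -> (0 < norm0 y)%N.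
Proof. move=> H; rewrite norm0E -has_count; apply/hasP; exists j; first by rewrite mem_enum.
by apply/nzbP. Qed.

Lemma norm0_restr_split (P : pred 'I_n) h :
  norm0 h = (norm0 (restr P h) + norm0 (restr (fun i => ~~ P i) h))%N.
Proof. rewrite !norm0E -(count_split P).
congr addn; apply: eq_count => i; rewrite /nzb /restr; case: (P i) => //=;
by case: (Req_EM_T 0 0). Qed.

Lemma norm0_add (x y : vec n) : (norm0 (vadd x y) <= norm0 x + norm0 y)%N.
Proof. rewrite !norm0E -count_predUI.
apply: leq_trans (leq_addr _ _); apply: sub_count => i /=.
rewrite /vadd /nzb; case: (Req_EM_T (x i) 0) => hx; case: (Req_EM_T (y i) 0) => hy //=.
by rewrite hx hy Rplus_0_r; case: (Req_EM_T 0 0). Qed.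

Lemma norm0_opp (x : vec n) : norm0 (fun i => - x i) = norm0 x.
Proof. rewrite !norm0E; apply: eq_count => i; rewrite /nzb.
case: (Req_EM_T (- x i) 0); case: (Req_EM_T (x i) 0) => // h1 h2; exfalso; lra. Qed.

Lemma norm0_le_n (x : vec n) : (norm0 x <= n)%N.
Proof. rewrite norm0E; apply: leq_trans (count_size _ _) _; by rewrite size_enum_ord. Qed.

Lemma norm1_restr_split (P : pred 'I_n) h :
  norm1 h = norm1 (restr P h) + norm1 (restr (fun i => ~~ P i) h).
Proof. rewrite /norm1 !rsumE -lsum_add; apply: lsum_ext => i; rewrite /restr.
case: (P i) => /=; rewrite Rabs_R0; ring. Qed.

End Vec.

Lemma list_max (T : eqType) (s : seq T) (f : T -> R) :
  s <> [::] -> exists x, x \in s /\ forall y, y \in s -> f y <= f x.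
Proof.
elim: s => [|x s IH] // _.
case: s IH => [|z s] IH.
  exists x; split; first by rewrite inE eqxx.
  by move=> y; rewrite inE => /eqP ->; lra.
have [w [ws wm]] := IH ltac:(done).
case: (Rle_lt_dec (f w) (f x)) => h.
- exists x; split; first by rewrite inE eqxx.
  move=> y; rewrite inE => /orP [/eqP ->|ys]; first lra.
  have := wm y ys; lra.
- exists w; split; first by rewrite inE ws orbT.
  move=> y; rewrite inE => /orP [/eqP ->|ys]; first lra.
  exact: wm.
Qed.

Lemma count_add1 (T : eqType) (s : seq T) (P Q : pred T) i : uniq s ->
  ~~ P i -> Q i ->
  count (fun j => (P j || (j == i)) && Q j) s =
  (count (fun j => P j && Q j) s + (i \in s))%N.
Proof.
move=> + nP Qi; elim: s => [|x s IH] //= /andP [xs us].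
rewrite IH // inE; case: (eqVneq x i) => [exi|xi] /=.
- subst x; rewrite (negbTE nP) Qi (negbTE xs) /= add0n addn0 add1n addn1 //.
- by case: (P x); case: (Q x); rewrite /= ?add0n ?add1n ?addnA.
Qed.

Section Sel.
Variable n : nat.
Local Notation E := (enum 'I_n).

Lemma count_false : count (fun _ : 'I_n => false) E = 0%N.
Proof. by elim: E. Qed.

Lemma count_compl (S : pred 'I_n) :
  (count S E + count (fun i => ~~ S i) E = n)%N.
Proof.
have := count_split S (fun _ => true) E; rewrite count_predT => h.
transitivity (size E); last exact: size_enum_ord.
rewrite -h.
by congr addn; apply: eq_count => i; rewrite andbT.
Qed.

Lemma sel (h : vec n) K : (K <= n)%N -> exists S : pred 'I_n,
  count S E = K /\ forall i j, S j -> ~~ S i -> Rabs (h i) <= Rabs (h j).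
Proof.
elim: K => [|K IH] hK.
  by exists (fun _ => false); split => //; exact: count_false.
have [S [cS dS]] := IH (ltnW hK).
have hs : has (fun i => ~~ S i) E.
  rewrite has_count; have := count_compl S; rewrite cS; lia.
move: hs; rewrite has_filter => /eqP ne.
have [i0 [i0l i0m]] := list_max (fun i => Rabs (h i)) ne.
move: i0l; rewrite mem_filter => /andP [ni0 _].
exists (fun j => S j || (j == i0)); split.
  have := @count_add1 _ E S (fun _ => true) i0 (enum_uniq 'I_n) ni0 (eq_refl true).
  rewrite mem_enum addn1 -cS => hc.
  transitivity (count (fun j => (S j || (j == i0)) && true) E).
    by apply: eq_count => j; rewrite andbT.
  rewrite hc; congr (_.+1); apply: eq_count => j; by rewrite andbT.
move=> i j /orP [Sj|/eqP ->]; rewrite negb_or => /andP [nSi nii0].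
  exact: dS.
by apply: i0m; rewrite mem_filter nSi mem_enum.
Qed.

Lemma split_pred (Q : pred 'I_n) k : (k <= count Q E)%N -> exists P : pred 'I_n,
  count (fun i => P i && Q i) E = k.
Proof.
elim: k => [|k IH] hk.
  by exists (fun _ => false); exact: count_false.
have [P cP] := IH (ltnW hk).
have hs : has (fun i => ~~ P i && Q i) E.
  rewrite has_count; have := count_split P Q E; rewrite cP; lia.
move/hasP: hs => [i0 _ /andP [nP Qi]].
exists (fun j => P j || (j == i0)).
by rewrite (count_add1 (enum_uniq 'I_n) nP Qi) mem_enum cP addn1.
Qed.

End Sel.

Section Q.
Variable n B : nat.
Hypothesis hB : (0 < B)%N.
Local Notation E := (enum 'I_n).
Local Notation t := (sqrt (INR B)).

Lemma t_ge1 : 1 <= t.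
Proof. rewrite -sqrt_1; apply: sqrt_le_1_alt; apply: (le_INR 1); apply/leP; exact: hB. Qed.

Lemma t2 : t ^ 2 = INR B.
Proof. apply: pow2_sqrt; exact: pos_INR. Qed.

Lemma base (y : vec n) c : 0 <= c -> (norm0 y <= B)%N -> (forall i, Rabs (y i) <= c) ->
  norm2 y <= (t - / t) * c + norm1 y / t.
Proof.
move=> c0 hy hc.
have t1 := t_ge1.
set u := / t.
have u0 : 0 < u by apply: Rinv_0_lt_compat; lra.
have tu : t * u = 1 by rewrite /u; field; lra.
set s := norm1 y.
have s0 : 0 <= s by exact: norm1_ge0.
set q := rsum (fun i => y i ^ 2).
have hq1 : q <= c * s by exact: lsum_sq_max.
have hq2 : q <= s ^ 2.
  have := @lsum_sq_le _ E (fun i => Rabs (y i)) (fun i => Rabs_pos (y i)).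
  have -> : lsum E (fun i => Rabs (y i) ^ 2) = q.
    by rewrite /q rsumE; apply: lsum_ext => i; exact: pow2_abs.
  done.
have hs : s <= c * INR B.
  apply: Rle_trans (lsum_abs_count E c0 hc) _.
  rewrite -norm0E; apply: Rmult_le_compat_l => //; apply: le_INR; apply/leP; exact: hy.
have q0 : 0 <= q by apply: lsum_nonneg => i; apply: pow2_ge_0.
rewrite /norm2 -/q /Rdiv -/u.
case: (Rle_lt_dec s c) => hsc.
- apply: Rle_trans (_ : sqrt (s ^ 2) <= _).
    exact: sqrt_le_1_alt.
  rewrite sqrt_pow2 //.
  have u1 : u <= 1 by rewrite /u -Rinv_1; apply: Rinv_le_contravar; lra.
  nra.
- apply: Rle_trans (_ : sqrt ((c * t) ^ 2) <= _).
    apply: sqrt_le_1_alt.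
    have -> : (c * t) ^ 2 = c ^ 2 * (t ^ 2) by ring.
    rewrite t2; nra.
  rewrite sqrt_pow2; last by apply: Rmult_le_pos; lra.
  nra.
Qed.

Variable f : vec n -> R.
Variable Kc : R.
Hypothesis hK : 0 <= Kc.
Hypothesis hsub : forall x y, f (vadd x y) <= f x + f y.
Hypothesis hsp : forall w, (norm0 w <= B)%N -> f w <= Kc * norm2 w.

Lemma Qlem N : forall h c, (norm0 h <= N)%N -> 0 <= c -> (forall i, Rabs (h i) <= c) ->
  f h <= Kc * ((t - / t) * c + norm1 h / t).
Proof.
elim: N => [|N IH] h c hN c0 hc;
  (case: (leqP (norm0 h) B) => hB';
   [by apply: Rle_trans (hsp hB') _; apply: Rmult_le_compat_l => //; exact: base|]).
  lia.
have t1 := t_ge1.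
have hBn : (B <= n)%N by have := norm0_le_n h; lia.
have [S [cS dS]] := sel h hBn.
have ne : filter S E <> [::].
  apply/eqP; rewrite -has_filter has_count cS; exact: hB.
have [jm [jml jmm]] := list_max (fun i => - Rabs (h i)) ne.
move: jml; rewrite mem_filter => /andP [Sjm _].
set c' := Rabs (h jm).
have hout : forall i, ~~ S i -> Rabs (h i) <= c' by move=> i; exact: dS.
have hin : forall j, S j -> c' <= Rabs (h j).
  move=> j Sj; have := jmm j; rewrite mem_filter Sj mem_enum => /(_ (eq_refl true)); rewrite /c'; lra.
have c'0 : 0 <= c' by exact: Rabs_pos.
have c'c : c' <= c by exact: hc.
set w1 := restr S h; set rest := restr (fun i => ~~ S i) h.
have hfh : f h <= f w1 + f rest by have := hsub w1 rest; rewrite restr_split.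
have fw1 : f w1 <= Kc * norm2 w1.
  apply: hsp; rewrite -cS; apply: norm0_le_count => i nS; by rewrite /w1 /restr (negbTE nS).
set y : vec n := fun i => if S i then Rabs (h i) - c' else 0.
set e : vec n := fun i => if S i then c' else 0.
have hw1 : norm2 w1 <= norm2 y + c' * t.
  rewrite -norm2_abs.
  have -> : (fun i => Rabs (w1 i)) = vadd y e.
    apply: functional_extensionality => i; rewrite /vadd /y /e /w1 /restr.
    by case: (S i); [ring|rewrite Rabs_R0; ring].
  apply: Rle_trans (norm2_add y e) _; apply: Rplus_le_compat_l.
  have -> : norm2 e = c' * t.
    rewrite /norm2 rsumE.
    have -> : lsum E (fun i => e i ^ 2) = lsum E (fun i => if S i then c' ^ 2 else 0).
      by apply: lsum_ext => i; rewrite /e; case: (S i) => //; ring.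
    rewrite lsum_const_if cS sqrt_mult; [|exact: pow2_ge_0|exact: pos_INR].
    by rewrite sqrt_pow2.
  lra.
have hy : norm2 y <= (t - / t) * (c - c') + norm1 y / t.
  apply: base; first lra.
    rewrite -cS; apply: norm0_le_count => i nS; by rewrite /y (negbTE nS).
  move=> i; rewrite /y; case E1: (S i).
    rewrite Rabs_pos_eq; first by have := hc i; lra.
    have := hin i E1; lra.
  rewrite Rabs_R0; lra.
have hny : norm1 y = norm1 w1 - c' * INR B.
  rewrite /norm1 !rsumE -cS -lsum_const_if.
  have -> : lsum E (fun i => Rabs (w1 i)) - lsum E (fun i => if S i then c' else 0)
     = lsum E (fun i => Rabs (w1 i) + (-1) * (if S i then c' else 0)).
    by rewrite lsum_add lsum_scal; ring.
  apply: lsum_ext => i; rewrite /y /w1 /restr; case E1: (S i).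
    rewrite Rabs_pos_eq; first ring.
    have := hin i E1; lra.
  rewrite Rabs_R0; ring.
have hrN : (norm0 rest <= N)%N.
  have hsp0 := norm0_restr_split S h.
  case: (Req_EM_T (h jm) 0) => hjm.
  - have : norm0 rest = 0%N.
      apply: norm0_zero => i; rewrite /rest /restr; case E1: (~~ S i) => //.
      have := hout i E1; rewrite /c' hjm Rabs_R0 => hh.
      case: (Req_EM_T (h i) 0) => // hi; have := Rabs_pos_lt _ hi; lra.
    have : (norm0 w1 <= B)%N by rewrite -cS; apply: norm0_le_count => i nS; by rewrite /w1 /restr (negbTE nS).
    rewrite -/w1 -/rest in hsp0; lia.
  - have : (0 < norm0 w1)%N by apply: (@norm0_pos _ _ jm); rewrite /w1 /restr Sjm.
    rewrite -/w1 -/rest in hsp0; lia.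
have hr : f rest <= Kc * ((t - / t) * c' + norm1 rest / t).
  apply: IH => // i; rewrite /rest /restr; case E1: (~~ S i); first exact: hout.
  rewrite Rabs_R0; lra.
have hn1 : norm1 h = norm1 w1 + norm1 rest by exact: norm1_restr_split.
have key : norm2 w1 + ((t - / t) * c' + norm1 rest / t) <= (t - / t) * c + norm1 h / t.
  have ex : (norm1 w1 - c' * INR B) / t + c' * t = norm1 w1 / t.
    move: t2 t1; set T := sqrt (INR B) => hT hT1; rewrite -hT; field; lra.
  rewrite hn1; move: hy; rewrite hny => hy.
  have -> : (norm1 w1 + norm1 rest) / t = norm1 w1 / t + norm1 rest / t by field; lra.
  lra.
have := Rmult_le_compat_l _ _ _ hK key.
have := Rmult_le_compat_l _ _ _ hK hw1.
nra.
Qed.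

End Q.

Lemma nzb_restr n (P : pred 'I_n) (v : vec n) i : nzb (restr P v) i = P i && nzb v i.
Proof. rewrite /nzb /restr; case: (P i) => //=; by case: (Req_EM_T 0 0). Qed.

Lemma tail n (h : vec n) B : (0 < B)%N -> exists (S : pred 'I_n) c',
  (count S (enum 'I_n) <= B - 1)%N /\ 0 <= c' /\ (forall i, ~~ S i -> Rabs (h i) <= c') /\
  INR (B - 1) * c' <= norm1 (restr S h).
Proof.
move=> hB.
have hK : (minn (B - 1) n <= n)%N by lia.
have [S [cS dS]] := sel h hK.
exists S.
case hs : (has (fun i => ~~ S i) (enum 'I_n)).
- move: (hs); rewrite has_filter => /eqP ne.
  have [i0 [i0l i0m]] := list_max (fun i => Rabs (h i)) ne.
  move: i0l; rewrite mem_filter => /andP [ni0 _].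
  exists (Rabs (h i0)); split; first lia.
  split; first exact: Rabs_pos.
  split; first by move=> i nSi; apply: i0m; rewrite mem_filter nSi mem_enum.
  have eK : count S (enum 'I_n) = (B - 1)%N.
    have := count_compl S; move: hs; rewrite has_count => hs hc; lia.
  rewrite -eK Rmult_comm /norm1 rsumE -lsum_const_if; apply: lsum_le => i; rewrite /restr.
  case E1: (S i); last by rewrite Rabs_R0; lra.
  exact: dS.
- exists 0; split; first lia.
  split; first lra.
  split; first by move=> i nSi; exfalso; move/negbT: hs => /hasPn /(_ i); rewrite mem_enum nSi => /(_ (eq_refl true)).
  rewrite Rmult_0_r; exact: norm1_ge0.
Qed.

Lemma vsub0 n (v : vec n) : vsub v (@vzero n) = v.
Proof. apply: functional_extensionality => i; rewrite /vsub /vzero; ring. Qed.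

Lemma claim (k n m a b l : nat) (alpha delta eps : R) (G : vec k -> vec n)
  (A : mat m n)
  (ha : (0 < a)%nat) (hb : (0 < b)%nat) (hl : (0 < l)%nat)
  (halpha : 0 < alpha < 1) (hdelta : 0 <= delta) (heps : 0 <= eps)
  (hsrec : SREC A (S_G' (INR ((a + b) * l)%nat / 2) G) (1 - alpha) delta)
  (hrip : RIP A (INR (b * l)%nat) alpha) (eta : vec n) (hT : T_A A eps eta)
  (xh : vec n) (hx : S_G' (INR (a * l)) G xh) :
  norm2 eta <=
      / sqrt (INR (b * l)%nat) * ((1 + alpha) / (1 - alpha) + 1)
        * norm1 (vsub eta xh)
      + / (1 - alpha) * eps + delta / (1 - alpha).
Proof.
set B := (b * l)%N.
have hB : (0 < B)%N by rewrite /B; lia.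
set t := sqrt (INR B).
have t1 : 1 <= t := t_ge1 hB.
have ht2 : t ^ 2 = INR B := t2 B.
move: hx => [z1 [z2 [nu [hnu exh]]]].
move: hnu; rewrite /S_sparse vsub0 => /INR_le /leP hnu.
set h := vsub eta xh.
have [S [c' [cS [c'0 [hout hin]]]]] := tail h hB.
set u := restr S h; set r := restr (fun i => ~~ S i) h.
set s := norm1 h.
have hs : s = norm1 u + norm1 r by exact: norm1_restr_split.
have hrN : (norm0 r <= n)%N by exact: norm0_le_n.
have hrc : forall i, Rabs (r i) <= c'.
  move=> i; rewrite /r /restr; case E1: (~~ S i); first exact: hout.
  rewrite Rabs_R0; lra.
have bnd : (t - / t) * c' + norm1 r / t <= s / t.
  have eB : INR (B - 1) = INR B - 1 by rewrite minus_INR; [rewrite /=; ring|apply/leP; lia].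
  rewrite eB -ht2 in hin.
  have -> : (t - / t) * c' = (t ^ 2 - 1) * c' / t by field; lra.
  rewrite hs; unfold Rdiv.
  have ti : 0 < / t by apply: Rinv_0_lt_compat; lra.
  have := Rmult_le_compat_r (/ t) _ _ (Rlt_le _ _ ti) hin.
  rewrite -/u => hh; nra.
have R1 : norm2 (mulmv A r) <= (1 + alpha) * (s / t).
  have := @Qlem n B hB (fun x => norm2 (mulmv A x)) (1 + alpha) ltac:(lra) _ _ n r c' hrN c'0 hrc.
  move=> H; apply: Rle_trans (H _ _) _.
  - move=> x y; rewrite mulmv_add; exact: norm2_add.
  - move=> w hw; have := hrip w; rewrite /S_sparse vsub0 => /(_ (le_INR _ _ (elimT leP hw))); lra.
  - apply: Rmult_le_compat_l; [lra|exact: bnd].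
have R2 : norm2 r <= s / t.
  have := @Qlem n B hB (fun x => norm2 x) 1 ltac:(lra) _ _ n r c' hrN c'0 hrc.
  move=> H; apply: Rle_trans (H _ _) _.
  - move=> x y; exact: norm2_add.
  - move=> w hw; rewrite /=; lra.
  - rewrite Rmult_1_l; exact: bnd.
set x : vec n := vadd eta (fun i => - r i).
have hex : eta = vadd x r.
  by apply: functional_extensionality => i; rewrite /x /vadd; ring.
have Nx : norm2 eta <= norm2 x + s / t.
  rewrite {1}hex; apply: Rle_trans (norm2_add _ _) _; lra.
have Ax : norm2 (mulmv A x) <= eps + (1 + alpha) * (s / t).
  rewrite /x mulmv_add mulmv_opp; apply: Rle_trans (norm2_add _ _) _.
  rewrite (norm2_opp (mulmv A r)); move: hT; rewrite /T_A; lra.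
set v := vadd nu u.
have hv : (norm0 v <= a * l + (B - 1))%N.
  apply: leq_trans (norm0_add nu u) _.
  have : (norm0 u <= B - 1)%N.
    apply: leq_trans cS; apply: norm0_le_count => i nS; by rewrite /u /restr (negbTE nS).
  lia.
set N0 := norm0 v.
have hk : (N0 %/ 2 <= count (nzb v) (enum 'I_n))%N by rewrite -norm0E; lia.
have [P cP] := split_pred hk.
set v1 := restr P v; set v2 := restr (fun i => ~~ P i) v.
have n1 : norm0 v1 = (N0 %/ 2)%N.
  by rewrite norm0E -cP; apply: eq_count => i; rewrite nzb_restr.
have n2 : norm0 v2 = (N0 - N0 %/ 2)%N.
  have := norm0_restr_split P v; rewrite -/v1 -/v2 -/N0 n1; lia.
set x1 := vadd (vsub (G z1) (G z2)) v1.
set x2 := vadd (vsub (G z1) (G z1)) (fun i => - v2 i).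
have memh : forall w : vec n, (2 * norm0 w <= (a + b) * l)%N ->
    S_sparse (INR ((a + b) * l) / 2) (@vzero n) w.
  move=> w hw; rewrite /S_sparse vsub0.
  have := le_INR _ _ (elimT leP hw); rewrite mult_INR /=; lra.
have m1 : S_G' (INR ((a + b) * l) / 2) G x1.
  exists z1, z2, v1; split => //; apply: memh; rewrite n1 /B in hv *; lia.
have m2 : S_G' (INR ((a + b) * l) / 2) G x2.
  exists z1, z1, (fun i => - v2 i); split => //; apply: memh; rewrite norm0_opp n2 /B in hv *; lia.
have ex12 : vsub x1 x2 = x.
  apply: functional_extensionality => i.
  rewrite /x1 /x2 /x /vsub /vadd /v1 /v2 /v /restr /r /u /h exh /vsub /vadd.
  unfold restr; case: (P i); case: (S i) => /=; ring.
have := hsrec x1 x2 m1 m2; rewrite ex12 => hS.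
have a1 : 0 < 1 - alpha by lra.
have Nx2 : norm2 x <= (eps + (1 + alpha) * (s / t) + delta) / (1 - alpha).
  apply: (Rmult_le_reg_l (1 - alpha)) => //.
  have -> : (1 - alpha) * ((eps + (1 + alpha) * (s / t) + delta) / (1 - alpha)) =
    eps + (1 + alpha) * (s / t) + delta by field; lra.
  lra.
have -> : / t * ((1 + alpha) / (1 - alpha) + 1) * norm1 (vsub eta xh) + / (1 - alpha) * eps
   + delta / (1 - alpha) = (eps + (1 + alpha) * (s / t) + delta) / (1 - alpha) + s / t.
  rewrite /s /h; field; lra.
lra.
Qed.

Unset Implicit Arguments.
Set Strict Implicit.

Theorem lemma4 (k n m a b l : nat) (alpha delta eps : R) (G : vec k -> vec n)
  (A : mat m n)
  (ha : (0 < a)%nat) (hb : (0 < b)%nat) (hl : (0 < l)%nat)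
  (halpha : 0 < alpha < 1) (hdelta : 0 <= delta) (heps : 0 <= eps)
  (hsrec : SREC A (S_G' (INR ((a + b) * l)%nat / 2) G) (1 - alpha) delta)
  (hrip : RIP A (INR (b * l)%nat) alpha) :
  forall eta : vec n, T_A A eps eta ->
    norm2 eta <=
      / sqrt (INR (b * l)%nat) * ((1 + alpha) / (1 - alpha) + 1)
        * sigma_G' (a * l)%nat G eta
      + / (1 - alpha) * eps + delta / (1 - alpha).
Proof.
move=> eta hT.
rewrite /sigma_G'.
case: (completeness _ _ _) => L [ub lub] /=.
set c0 := / sqrt (INR (b * l)) * ((1 + alpha) / (1 - alpha) + 1).
set C := / (1 - alpha) * eps + delta / (1 - alpha).
have t1 : 1 <= sqrt (INR (b * l)).
  apply: (@t_ge1 (b * l)%N); rewrite muln_gt0; apply/andP; split; [exact: hb|exact: hl].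
have c0p : 0 < c0.
  rewrite /c0; apply: Rmult_lt_0_compat.
    apply: Rinv_0_lt_compat; lra.
  have : 0 < (1 + alpha) / (1 - alpha) by apply: Rdiv_lt_0_compat; lra.
  lra.
have hub : is_upper_bound (sigma_set (a * l) G eta) (- ((norm2 eta - C) / c0)).
  move=> y [xh [hx ->]].
  have := claim ha hb hl halpha hdelta heps hsrec hrip hT hx; rewrite -/c0 -/C => h.
  apply: Ropp_le_contravar.
  apply: (Rmult_le_reg_l c0) => //.
  have -> : c0 * ((norm2 eta - C) / c0) = norm2 eta - C by field; lra.
  move: h; rewrite /C; lra.
have := lub _ hub.
move=> hL.
have : (norm2 eta - C) / c0 <= - L by lra.
move=> h2.
have := Rmult_le_compat_l _ _ _ (Rlt_le _ _ c0p) h2.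
have -> : c0 * ((norm2 eta - C) / c0) = norm2 eta - C by field; lra.
rewrite /C; lra.
Qed.
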